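(* Let $S$ be a solid and let $x,y\in S^*$. If $R(x)\le R(y)$, then $e(x)y\le e(y)x$.
   Context: A solid is a set $S$ with two binary operations $+$ and $\cdot$ (written $xy$) and a binary relation $\le$ satisfying the following axioms (all variables range over $S$). (A1) $+$ is associative and commutative. (A2) For each $x$ there is $e$ with $x+e=x$ such that $e+f=e$ for every $f$ with $x+f=x$; this $e$ is unique and is denoted $e(x)$ (the magnitude of $x$). An element $x$ with $x=e(x)$ is called a magnitude. (A3) For each $x$ there is $s$ with $x+s=e(x)$ and $e(s)=e(x)$; it is unique and denoted $-x$; write $x-y$ for $x+(-y)$. (A4) $e(x+y)=e(x)$ or $e(x+y)=e(y)$. (M1) $\cdot$ is associative and commutative. (M2) For each $x\neq e(x)$ there is $u$ with $xu=x$ such that $uv=u$ for every $v$ with $xv=x$; it is unique and denoted $u(x)$. (M3) For each $x\ne e(x)$ there is $d$ with $xd=u(x)$ and $u(d)=u(x)$; it is unique and denoted $x^{-1}$; write $y/x$ for $yx^{-1}$. (M4) If $x\neq e(x)$ and $y\ne e(y)$ then $u(xy)=u(x)$ or $u(xy)=u(y)$. (O1) $\le$ is a total order (reflexive, antisymmetric, transitive, total); $x<y$ means $x\le y$ and $x\ne y$. (O2) $x\le y\Rightarrow x+z\le y+z$. (O3) $y+e(x)=e(x)\Rightarrow (y\le e(x)$ and $-y\le e(x))$. (O4) $(e(x)<x$ and $y\le z)\Rightarrow xy\le xz$. (O5) $e(y)\le y\le z\Rightarrow e(x)y\le e(x)z$. (AM1) For all $x,y$ there is $z$ with $e(x)y=e(z)$.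 (AM2) $e(xy)=e(x)y+e(y)x$. (AM3) If $x\ne e(x)$ then $e(u(x))=e(x)/x$. (AM4) (distributivity axiom) $xy+xz=x(y+z)+e(x)y+e(x)z$. (AM5) $-(xy)=(-x)y$. (E1) There is $m$ with $m+x=x$ for all $x$; it is unique, called zero and denoted $0$. (E2) There is $u$ with $ux=x$ for all $x$; it is unique, called one and denoted $1$. (E3) There is $M$ with $e(x)+M=M$ for all $x$. (E4) There is $x$ with $e(x)\ne 0$ and $e(x)\ne M$. (E5) For every $x$ there is $a$ with $x=a+e(x)$ and $e(a)=0$. (E6) If $x,y$ are magnitudes with $x<y$, there is $z$ with $z\ne e(z)$ and $x<z<y$. Further notation: $S^*=\{x\in S: x\ne e(x)\}$ (zeroless elements). $x$ is positive if $e(x)\le x$ and negative if $x<e(x)$; $|x|=x$ if $x$ is positive and $|x|=-x$ if $x$ is negative. $x$ is precise if $e(x)=0$. The relative uncertainty $R(x)$ is $e(u(x))$ if $x\ne e(x)$, and $M$ (from (E3)) if $x=e(x)$. *)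

(* Defs.v *)
From Stdlib Require Import ClassicalEpsilon.
Set Implicit Arguments.

(* The operations e, -, u, ^-1 and the constants 0, 1, M, whose existence
   (and, where stated, uniqueness) is postulated by the axioms, are recorded
   as fields together with their characterizing properties. *)
Record Solid := {
  carrier :> Type;
  add : carrier -> carrier -> carrier;
  mul : carrier -> carrier -> carrier;
  le  : carrier -> carrier -> Prop;
  e   : carrier -> carrier;
  opp : carrier -> carrier;
  u   : carrier -> carrier;      (* u(x), (M2), meaningful for x <> e x *)
  inv : carrier -> carrier;      (* x^-1, (M3), meaningful for x <> e x *)
  zero : carrier;
  one  : carrier;
  Mtop : carrier;
  addA : forall x y z, add x (add y z) = add (add x y) z;
  addC : forall x y, add x y = add y x;
  e_neutral : forall x, add x (e x) = x;
  e_min : forall x f, add x f = x -> add (e x) f = e x;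
  e_unique : forall x d, add x d = x ->
      (forall f, add x f = x -> add d f = d) -> d = e x;
  opp_spec : forall x, add x (opp x) = e x /\ e (opp x) = e x;
  opp_unique : forall x s, add x s = e x -> e s = e x -> s = opp x;
  e_add : forall x y, e (add x y) = e x \/ e (add x y) = e y;
  mulA : forall x y z, mul x (mul y z) = mul (mul x y) z;
  mulC : forall x y, mul x y = mul y x;
  u_neutral : forall x, x <> e x -> mul x (u x) = x;
  u_min : forall x v, x <> e x -> mul x v = x -> mul (u x) v = u x;
  u_unique : forall x d, x <> e x -> mul x d = x ->
      (forall v, mul x v = x -> mul d v = d) -> d = u x;
  inv_spec : forall x, x <> e x -> mul x (inv x) = u x /\ u (inv x) = u x;
  inv_unique : forall x d, x <> e x -> mul x d = u x -> u d = u x -> d = inv x;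
  u_mul : forall x y, x <> e x -> y <> e y ->
      u (mul x y) = u x \/ u (mul x y) = u y;
  le_refl : forall x, le x x;
  le_antisym : forall x y, le x y -> le y x -> x = y;
  le_trans : forall x y z, le x y -> le y z -> le x z;
  le_total : forall x y, le x y \/ le y x;
  le_add : forall x y z, le x y -> le (add x z) (add y z);
  le_e : forall x y, add y (e x) = e x -> le y (e x) /\ le (opp y) (e x);
  le_mul : forall x y z, (le (e x) x /\ e x <> x) -> le y z -> le (mul x y) (mul x z);
  le_mul_e : forall x y z, le (e y) y -> le y z -> le (mul (e x) y) (mul (e x) z);
  am1 : forall x y, exists z, mul (e x) y = e z;
  am2 : forall x y, e (mul x y) = add (mul (e x) y) (mul (e y) x);
  am3 : forall x, x <> e x -> e (u x) = mul (e x) (inv x);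
  am4 : forall x y z, add (mul x y) (mul x z)
                      = add (add (mul x (add y z)) (mul (e x) y)) (mul (e x) z);
  am5 : forall x y, opp (mul x y) = mul (opp x) y;
  zero_spec : forall x, add zero x = x;
  one_spec : forall x, mul one x = x;
  Mtop_spec : forall x, add (e x) Mtop = Mtop;
  e4 : exists x, e x <> zero /\ e x <> Mtop;
  e5 : forall x, exists a, x = add a (e x) /\ e a = zero;
  e6 : forall x y, x = e x -> y = e y -> (le x y /\ x <> y) ->
      exists z, z <> e z /\ (le x z /\ x <> z) /\ (le z y /\ z <> y)
}.

Arguments add {s0} _ _.
Arguments mul {s0} _ _.
Arguments le {s0} _ _.
Arguments e {s0} _.
Arguments opp {s0} _.
Arguments u {s0} _.
Arguments inv {s0} _.

Definition lt (S : Solid) (x y : S) : Prop := le x y /\ x <> y.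

Definition zeroless (S : Solid) (x : S) : Prop := x <> e x.

Definition relunc (S : Solid) (x : S) : S :=
  if excluded_middle_informative (x = e x) then Mtop S else e (u x).

Arguments lt {S} _ _.
Arguments zeroless {S} _.
Arguments relunc {S} _.

(* Main.v *)
Require Import Defs.
From Stdlib Require Import ClassicalEpsilon.
Arguments addA {s0}.
Arguments addC {s0}.
Arguments e_neutral {s0}.
Arguments e_min {s0}.
Arguments e_unique {s0}.
Arguments opp_spec {s0}.
Arguments opp_unique {s0}.
Arguments e_add {s0}.
Arguments mulA {s0}.
Arguments mulC {s0}.
Arguments u_neutral {s0}.
Arguments u_min {s0}.
Arguments u_unique {s0}.
Arguments inv_spec {s0}.
Arguments inv_unique {s0}.
Arguments u_mul {s0}.
Arguments le_refl {s0}.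
Arguments le_antisym {s0}.
Arguments le_trans {s0}.
Arguments le_total {s0}.
Arguments le_add {s0}.
Arguments le_e {s0}.
Arguments le_mul {s0}.
Arguments le_mul_e {s0}.
Arguments am1 {s0}.
Arguments am2 {s0}.
Arguments am3 {s0}.
Arguments am4 {s0}.
Arguments am5 {s0}.

Section L.
Variable S : Solid.

Lemma ee (z : S) : e (e z) = e z.
Proof.
  symmetry. apply e_unique.
  - apply e_min. apply e_neutral.
  - intros f Hf. exact Hf.
Qed.

Lemma mag_add (z : S) : add (e z) (e z) = e z.
Proof. pose proof (e_neutral (e z)) as H. rewrite ee in H. exact H. Qed.

Lemma mag_opp (w : S) : (exists z, w = e z) -> opp w = w.
Proof.
  intros [z ->]. symmetry. apply opp_unique.
  - rewrite ee. apply mag_add.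
  - reflexivity.
Qed.

Lemma sgn (x p w : S) : (p = x \/ p = opp x) -> (exists z, mul x w = e z) ->
  mul p w = mul x w.
Proof.
  intros [-> | ->] Hm; [reflexivity|].
  rewrite <- am5. apply mag_opp. exact Hm.
Qed.

Lemma key (x : S) : x <> e x -> mul x (mul (e x) (inv x)) = e x.
Proof.
  intros Hx.
  assert (E1 : mul x (mul (e x) (inv x)) = mul (e x) (u x)).
  { rewrite mulA, (mulC x (e x)), <- mulA. f_equal. apply inv_spec; auto. }
  rewrite E1.
  assert (E2 : e x = add (mul (e x) (u x)) (mul (e (u x)) x)).
  { rewrite <- am2. rewrite u_neutral; auto. }
  rewrite am3 in E2 by auto.
  rewrite <- mulA, (mulC (inv x) x), (proj1 (inv_spec x Hx)) in E2.
  destruct (am1 x (u x)) as [z Hz].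
  rewrite Hz in E2 |- *. rewrite mag_add in E2. auto.
Qed.

Lemma absv (x : S) : x <> e x -> exists p, (p = x \/ p = opp x) /\
  (le (e p) p /\ e p <> p) /\ e p = e x.
Proof.
  intros Hx. destruct (le_total (e x) x) as [H|H].
  - exists x. split; [left; reflexivity|]. split; [split; auto|reflexivity].
  - exists (opp x). destruct (opp_spec x) as [H1 H2].
    split; [right; reflexivity|]. rewrite H2. split; [|reflexivity]. split.
    + pose proof (le_add _ _ (opp x) H) as H3. rewrite H1 in H3.
      replace (add (e x) (opp x)) with (opp x) in H3; auto.
      rewrite addC, <- H2. symmetry. apply e_neutral.
    + intros Heq. apply Hx. transitivity (add x (opp x)); [rewrite <- Heq; symmetry; apply e_neutral | exact H1].
Qed.
End L.
Arguments absv {S x}.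
Arguments sgn {S x p w}.
Arguments key {S x}.

Theorem mainTheorem9 (S : Solid) (x y : S) :
  zeroless x -> zeroless y -> le (relunc x) (relunc y) ->
  le (mul (e x) y) (mul (e y) x).
Proof.
  unfold zeroless, relunc. intros Hx Hy H.
  destruct (excluded_middle_informative (x = e x)) as [h|_]; [contradiction|].
  destruct (excluded_middle_informative (y = e y)) as [h|_]; [contradiction|].
  rewrite !am3 in H by auto.
  destruct (absv Hx) as [p [Pp [Ppos Pe]]].
  destruct (absv Hy) as [q [Qq [Qpos Qe]]].
  pose proof (le_mul _ _ _ Ppos H) as H1.
  rewrite (sgn Pp) in H1 by (rewrite key; eauto).
  rewrite key in H1 by auto.
  pose proof (le_mul _ _ _ Qpos H1) as H2.
  rewrite !mulA, (mulC q p), <- !mulA in H2.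
  rewrite (@sgn _ y q (mul (e y) (inv y)) Qq) in H2 by (rewrite key; eauto).
  rewrite key in H2 by auto.
  rewrite (sgn Qq) in H2 by (rewrite mulC; apply am1).
  rewrite (sgn Pp) in H2 by (rewrite mulC; apply am1).
  rewrite (mulC y), (mulC x) in H2.
  exact H2.
Qed.
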